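(* Let $G$ be a group, $U$ a nonlocal vertex algebra on which $G$ acts by automorphisms, and $V=\coprod_{g\in G}V[g]$ a nonlocal vertex $G$-graded algebra. Assume that both $U$ and $V$ are irreducible nonlocal vertex algebras and that $U$ has countable dimension over $\mathbb{C}$. Then $U\sharp_GV$ is an irreducible nonlocal vertex algebra.
   Context: A nonlocal vertex algebra is a complex vector space $V$ with vector $\mathbf{1}$ and linear $Y:V\to\mathrm{Hom}(V,V((x)))$, $Y(v,x)=\sum_nv_nx^{-n-1}$, with $Y(\mathbf{1},x)v=v$, $Y(v,x)\mathbf{1}\in V[[x]]$ with constant term $v$, and weak associativity $(x_0+x_2)^lY(u,x_0+x_2)Y(v,x_2)w=(x_0+x_2)^lY(Y(u,x_0)v,x_2)w$ for some $l\ge0$. It is irreducible if $V$, as a module over itself via $Y$, has no submodules other than $0$ and $V$. A nonlocal vertex $G$-graded algebra ($e$ the identity of $G$) is a nonlocal vertex algebra $V=\coprod_gV[g]$ with $\mathbf{1}\in V[e]$ and $Y(u,x)v\in V[gh]((x))$ for $u\in V[g]$, $v\in V[h]$. The smash product $U\sharp_GV$ is $U\otimes V$ with vacuum $\mathbf{1}\otimes\mathbf{1}$ and $Y_\sharp(u\otimes v,x)(u'\otimes v')=Y(u,x)g(u')\otimes Y(v,x)v'$ for $u,u'\in U$, $v\in V[g]$, $v'\in V$; it is a nonlocal vertex algebra. *)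

(* Defs.v *)
From HB Require Import structures.
From mathcomp Require Import all_boot all_order all_algebra.
From mathcomp Require Import monoid.
From mathcomp Require Import reals complex.
Set Implicit Arguments.
Unset Strict Implicit.
Unset Printing Implicit Defensive.
Import Order.TTheory GRing.Theory Num.Theory.
Local Open Scope ring_scope.

(* Formal vertex operators are encoded by their modes:                      *)
(*   Y u v n  stands for  u_n v,  where  Y(u,x)v = \sum_n u_n v x^{-n-1}.    *)

Section NLVA.
Variable C : fieldType.

Definition gbinom (r : int) (k : nat) : C :=
  (\prod_(i < k) ((r - (i : nat)%:Z)%:~R : C)) / (k`!)%:R.

Variable V : lmodType C.

Definition bilinear_modes (Y : V -> V -> int -> V) : Prop :=
  (forall (a : C) u u' v n, Y (a *: u + u') v n = a *: Y u v n + Y u' v n) /\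
  (forall (a : C) u v v' n, Y u (a *: v + v') n = a *: Y u v n + Y u v' n).

(* Y(u,x)v \in V((x)) *)
Definition truncation (Y : V -> V -> int -> V) : Prop :=
  forall u v, exists N : int, forall n : int, N <= n -> Y u v n = 0.

Definition vacuum_axiom (one : V) (Y : V -> V -> int -> V) : Prop :=
  forall v n, Y one v n = if n == (-1)%R then v else 0.

(* Y(v,x)1 \in V[[x]] with constant term v *)
Definition creation_axiom (one : V) (Y : V -> V -> int -> V) : Prop :=
  forall v, (forall n : int, 0 <= n -> Y v one n = 0) /\ Y v one (-1) = v.

(* Weak associativity, coefficientwise.  For u,v,w there is l >= 0 with
     (x0+x2)^l Y(u,x0+x2)Y(v,x2)w = (x0+x2)^l Y(Y(u,x0)v,x2)w ,
   (binomial expansions in nonnegative powers of x2).  The coefficient of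
   x0^a x2^b of the left side is
     \sum_{k>=0} binom(a+k,k) u_{l-1-k-a} v_{k-b-1} w   (a finite sum, since
   v_m w = 0 for m large), and that of the right side is
     \sum_{j=0}^{l} binom(l,j) (u_{l-j-a-1} v)_{j-b-1} w . *)
Definition weak_assoc (Y : V -> V -> int -> V) : Prop :=
  forall u v w, exists l : nat, forall a b : int, exists K : nat,
    (forall k : nat, (K <= k)%N -> Y v w (k%:Z - b - 1) = 0) /\
    \sum_(k < K) gbinom (a + (k : nat)%:Z) k *:
        Y u (Y v w ((k : nat)%:Z - b - 1)) (l%:Z - 1 - (k : nat)%:Z - a)
    = \sum_(j < l.+1) ('C(l, j))%:R *:
        Y (Y u v (l%:Z - (j : nat)%:Z - a - 1)) w ((j : nat)%:Z - b - 1).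

Definition is_nlva (one : V) (Y : V -> V -> int -> V) : Prop :=
  [/\ bilinear_modes Y, truncation Y, vacuum_axiom one Y,
      creation_axiom one Y & weak_assoc Y].

Definition is_subspace (W : V -> Prop) : Prop :=
  W 0 /\ forall (a : C) x y, W x -> W y -> W (a *: x + y).

Definition is_submodule (Y : V -> V -> int -> V) (W : V -> Prop) : Prop :=
  is_subspace W /\ forall u w n, W w -> W (Y u w n).

Definition irreducible (Y : V -> V -> int -> V) : Prop :=
  forall W : V -> Prop, is_submodule Y W ->
    (forall v, W v -> v = 0) \/ (forall v, W v).

Definition countable_dim : Prop :=
  exists f : nat -> V, forall v : V,
    exists (n : nat) (c : 'I_n -> C), v = \sum_(i < n) c i *: f i.

Definition is_linear_map (W : lmodType C) (h : V -> W) : Prop :=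
  forall (a : C) x y, h (a *: x + y) = a *: h x + h y.

Definition is_automorphism (one : V) (Y : V -> V -> int -> V) (s : V -> V)
  : Prop :=
  [/\ is_linear_map s, bijective s, s one = one &
      forall u v n, s (Y u v n) = Y (s u) (s v) n].

End NLVA.

Section Group.
Variable C : fieldType.
Variable G : groupType.

Definition acts_by_automorphisms (U : lmodType C) (one : U)
  (Y : U -> U -> int -> U) (act : G -> U -> U) : Prop :=
  [/\ forall g, is_automorphism one Y (act g),
      forall u, act 1%g u = u &
      forall g h u, act (g * h)%g u = act g (act h u)].

Definition is_G_graded (V : lmodType C) (one : V) (Y : V -> V -> int -> V)
  (Vg : G -> V -> Prop) : Prop :=
  [/\ forall g, is_subspace (Vg g),
      (forall v : V, exists (s : seq G) (vs : G -> V),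
          [/\ uniq s, forall g, g \in s -> Vg g (vs g) &
              v = \sum_(g <- s) vs g]),
      (forall (s : seq G) (vs : G -> V), uniq s ->
          (forall g, g \in s -> Vg g (vs g)) ->
          \sum_(g <- s) vs g = 0 -> forall g, g \in s -> vs g = 0),
      Vg 1%g one &
      forall g h u v n, Vg g u -> Vg h v -> Vg (g * h)%g (Y u v n)].

End Group.

Section Tensor.
Variable C : fieldType.
Variables U V T : lmodType C.

Definition bilinear_fun (W : lmodType C) (f : U -> V -> W) : Prop :=
  (forall (a : C) u u' v, f (a *: u + u') v = a *: f u v + f u' v) /\
  (forall (a : C) u v v', f u (a *: v + v') = a *: f u v + f u v').

Definition is_tensor_product (tens : U -> V -> T) : Prop :=
  bilinear_fun tens /\
  forall (W : lmodType C) (f : U -> V -> W), bilinear_fun f ->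
    exists h : T -> W,
      [/\ is_linear_map h, (forall u v, h (tens u v) = f u v) &
          forall h' : T -> W, is_linear_map h' ->
            (forall u v, h' (tens u v) = f u v) -> forall t, h' t = h t].

End Tensor.

Section Smash.
Variable C : fieldType.
Variable G : groupType.
Variables U V T : lmodType C.

(* Ys is the vertex operator of the smash product U #_G V realized on the
   tensor product (T, tens):  Ys is bilinear and, for v in V[g],
     Y#(u(x)v, x)(u'(x)v') = Y(u,x) g(u') (x) Y(v,x) v',
   i.e.  (u(x)v)_n (u'(x)v') = \sum_{p} u_p g(u') (x) v_{n-1-p} v'
   (a finite sum; the range [lo, lo+M) below contains all nonzero terms). *)
Definition is_smash_modes (YU : U -> U -> int -> U) (YV : V -> V -> int -> V)
  (act : G -> U -> U) (Vg : G -> V -> Prop) (tens : U -> V -> T)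
  (Ys : T -> T -> int -> T) : Prop :=
  bilinear_modes Ys /\
  forall g u v u' v' n, Vg g v ->
    exists (lo : int) (M : nat),
      (forall p : int, (p < lo \/ lo + M%:Z <= p) ->
          YU u (act g u') p = 0 \/ YV v v' (n - 1 - p) = 0) /\
      Ys (tens u v) (tens u' v') n =
      \sum_(i < M) tens (YU u (act g u') (lo + (i : nat)%:Z))
                        (YV v v' (n - 1 - (lo + (i : nat)%:Z))).

End Smash.

(* Main.v *)
Require Import Defs.
From HB Require Import structures.
From mathcomp Require Import all_boot all_order all_algebra.
From mathcomp Require Import monoid.
From mathcomp Require Import reals complex.
From mathcomp Require Import classical_sets cardinality boolp constructive_ereal.
From mathcomp Require Import lebesgue_measure measure.
Import Order.TTheory GRing.Theory Num.Theory.
Local Open Scope ring_scope.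
From mathcomp Require Import zify.

Lemma R_uncount (R : realType) : ~ countable [set: R].
Proof.
move=> /countable_lebesgue_measure0 H.
have E := lebesgue_measure_itv (`[(0:R), (1:R)]).
set A := (X in lebesgue_measure X = _) in E.
rewrite /= lte_fin ltr01 /= ?sube0 in E.
have L : (lebesgue_measure A <= lebesgue_measure [set: R])%E.
  by apply: le_measure => //; rewrite ?inE //=; exact: measurable_itv.

by rewrite H E lee_fin ler10 in L.
Qed.

Section FI.
Variable R : realType.
Let Rp : pointedType := HB.pack (Real.sort R) (isPointed.Build (Real.sort R) 0).
Lemma fiber_inf  (Q : R -> nat -> Prop) : (forall r, exists n, Q r n) ->
  exists n (h : nat -> R), injective h /\ forall j, Q (h j) n.
Proof.
move=> HQ.
case: (pselect (exists n, infinite_set [set r | Q r n])) => [[n Hn]|Hn].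
  move/infiniteP: Hn => Hn; have H1 := (@pcard_leP _ Rp _ _ Hn); have [f fS fI] := iffLR injfunPex H1.
  exists n, f; split.
    by move=> a b; apply: fI; rewrite ?inE.
  by move=> j; apply: fS.
exfalso; apply: (R_uncount R).
have -> : [set: R]%classic = (\bigcup_(n in [set: nat]) [set r | Q r n])%classic.
  apply/seteqP; split => r // _; case: (HQ r) => n ?; by exists n.
apply: bigcup_countable => // n _; apply: finite_set_countable.
apply: contrapT => inf; apply: Hn; by exists n.
Qed.

End FI.
Lemma dep_lemma (F : fieldType) (U : lmodType F) (f : nat -> U) (n : nat)
  (x : 'I_n.+1 -> U) (M : 'I_n.+1 -> 'I_n -> F) :
  (forall j, x j = \sum_(i < n) M j i *: f i) ->
  exists a : 'I_n.+1 -> F, (exists j, a j != 0) /\ \sum_j a j *: x j = 0.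
Proof.
move=> Hx.
pose A := \matrix_(j < n.+1, i < n) M j i.
have : kermx A != 0.
  by rewrite kermx_eq0 /row_free neq_ltn ltnS rank_leq_col.
case/matrix0Pn => i [j0 Hj0].
have H0 : row i (kermx A) *m A = 0 by apply/sub_kermxP; exact: row_sub.
exists (fun j => kermx A i j); split; first by exists j0.
under eq_bigr => j _ do rewrite Hx scaler_sumr.
rewrite exchange_big /= big1 // => l _.
under eq_bigr => j _ do rewrite scalerA. rewrite -scaler_suml.
have := congr1 (fun B : 'M_(1, n) => B 0 l) H0; rewrite !mxE => E.
rewrite (_ : \sum_(j < n.+1) _ = 0) ?scale0r //.
rewrite -[RHS]E; apply: eq_bigr => j _; by rewrite !mxE.
Qed.
Section LinGen.
Variable F : fieldType.
Variables U W : lmodType F.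
Variable h : U -> W.
Hypothesis hl : is_linear_map h.

Lemma lin0 : h 0 = 0.
Proof.
have E := hl 1 0 0; rewrite !scale1r addr0 in E.
have E2 := congr1 (fun t => t - h 0) E. simpl in E2. rewrite subrr addrK in E2. by [].


Qed.
Lemma linD x y : h (x + y) = h x + h y.
Proof. by have := hl 1 x y; rewrite !scale1r. Qed.
Lemma linZ a x : h (a *: x) = a *: h x.
Proof. by have := hl a x 0; rewrite !addr0 lin0 addr0. Qed.
Lemma linN x : h (- x) = - h x.
Proof. by rewrite -scaleN1r linZ scaleN1r. Qed.
Lemma linB x y : h (x - y) = h x - h y.
Proof. by rewrite linD linN. Qed.
Lemma linsum (I : Type) (r : seq I) (P : pred I) (G : I -> U) :
  h (\sum_(i <- r | P i) G i) = \sum_(i <- r | P i) h (G i).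
Proof.
elim/big_rec2: _; first exact: lin0.
by move=> i y1 y2 _ <-; rewrite linD.
Qed.
End LinGen.
Arguments lin0 {F U W h} hl.
Arguments linD {F U W h} hl x y.
Arguments linZ {F U W h} hl a x.
Arguments linN {F U W h} hl x.
Arguments linB {F U W h} hl x y.
Arguments linsum {F U W h} hl {I} r P G.

Section Ev.
Variable F : fieldType.
Variable U : lmodType F.
Variable phi : U -> U.
Hypothesis phil : is_linear_map phi.

Lemma iter_lin i : is_linear_map (iter i phi).
Proof.
elim: i => [|i IH] a x y //=.
by rewrite IH phil.
Qed.

Definition ev (p : {poly F}) (z : U) := \sum_(i < size p) p`_i *: iter i phi z.

Lemma evE n (p : {poly F}) (z : U) : (size p <= n)%N -> ev p z = \sum_(i < n) p`_i *: iter i phi z.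
Proof.
move=> H; rewrite /ev (big_ord_widen _ (fun i => p`_i *: iter i phi z) H) big_mkcond.
apply: eq_bigr => i _; case: ifP => // /negbT; rewrite -leqNgt => Hi.
by rewrite nth_default // scale0r.
Qed.

Lemma evD (p q : {poly F}) z : ev (p + q) z = ev p z + ev q z.
Proof.
have Hp : (size p <= maxn (size p) (size q))%N by rewrite leq_maxl.
have Hq : (size q <= maxn (size p) (size q))%N by rewrite leq_maxr.
rewrite !(evE _ _ z (size_polyD p q)) (evE _ _ z Hp) (evE _ _ z Hq) -big_split /=.
by apply: eq_bigr => i _; rewrite coefD scalerDl.
Qed.

Lemma evZ a (p : {poly F}) z : ev (a *: p) z = a *: ev p z.
Proof.
rewrite (evE _ _ z (size_scale_leq a p)) /ev scaler_sumr.
by apply: eq_bigr => i _; rewrite coefZ scalerA.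
Qed.

Lemma evX (p : {poly F}) z : ev (p * 'X) z = ev p (phi z).
Proof.
have H : (size (p * 'X)%R <= (size p).+1)%N.
  apply: leq_trans (size_mul_leq _ _) _; rewrite size_polyX addn2 //.
rewrite (evE _ _ z H) big_ord_recl coefMX /= scale0r add0r /ev.
by apply: eq_bigr => i _; rewrite coefMX /= add0n -iterSr iterS.
Qed.

Lemma evC c z : ev c%:P z = c *: z.
Proof.
rewrite (evE 1 _ z (size_polyC_leq1 c)) big_ord1 coefC //.
Qed.

Lemma ev_lin (p : {poly F}) : is_linear_map (ev p).
Proof.
move=> a x y; rewrite /ev scaler_sumr -big_split /=.
by apply: eq_bigr => i _; rewrite iter_lin scalerDr !scalerA mulrC.
Qed.

Lemma evXsub (q : {poly F}) r z : ev (q * ('X - r%:P)) z = ev q (phi z - r *: z).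
Proof.
have -> : q * ('X - r%:P) = q * 'X + (- r) *: q.
  by rewrite mulrBr [q * r%:P]mulrC mul_polyC scaleNr.
by rewrite evD evZ evX -scaleNr addrC [phi z + _]addrC ev_lin.
Qed.

Lemma ev0 z : ev 0 z = 0.
Proof. by rewrite /ev size_poly0 big_ord0. Qed.

Lemma evsum (I : Type) (r : seq I) (P : pred I) (G : I -> {poly F}) z :
  ev (\sum_(i <- r | P i) G i) z = \sum_(i <- r | P i) ev (G i) z.
Proof. elim/big_rec2: _ => [|i y1 y2 _ <-]; [exact: ev0 | exact: evD]. Qed.
End Ev.
Arguments ev {F U} phi p z.
Arguments ev_lin {F U phi} phil p.
Arguments evXsub {F U phi} phil q r z.

Section EvC.
Variable F : closedFieldType.
Variable U : lmodType F.
Variable phi : U -> U.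
Hypothesis phil : is_linear_map phi.
Hypothesis Hinj : forall (r : F) (z : U), phi z - r *: z = 0 -> z = 0.

Lemma ev_inj (p : {poly F}) z : p != 0 -> ev phi p z = 0 -> z = 0.
Proof.
move: {2}(size p) (leqnn (size p)) => n.
elim: n p z => [|n IH] p z Hs Hp0 Hev.
  by move: Hp0; rewrite -size_poly_eq0; rewrite leqn0 in Hs; rewrite Hs.
case: (leqP (size p) 1) => H1.
  move: Hev Hp0; rewrite (size1_polyC H1) evC => /eqP.
  rewrite scaler_eq0 => /orP [/eqP -> | /eqP //]; by rewrite eqxx.
have : size p != 1 by rewrite neq_ltn H1 orbT.
case/closed_rootP => r /factor_theorem [q Hq].
have q0 : q != 0 by move: Hp0; rewrite Hq; apply: contraNneq => ->; rewrite mul0r.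
have Hsq : size p = (size q).+1.
  by rewrite Hq size_Mmonic ?monicXsubC // size_XsubC addn2.
move: Hev; rewrite Hq evXsub // => /IH; rewrite -ltnS -Hsq => /(_ Hs q0).
exact: Hinj.
Qed.
End EvC.
Arguments ev_inj {F U phi} phil Hinj {p z}.

Lemma lin_sub (F : fieldType) (U : lmodType F) (phi : U -> U) (c : F) :
  is_linear_map phi -> is_linear_map (fun z => phi z - c *: z).
Proof.
move=> Hl a x y; rewrite Hl scalerDr scalerBr !scalerA [c * a]mulrC -!scalerA.
by rewrite opprD addrACA.
Qed.

Section Dix.
Variable R : realType.
Variable U : lmodType R[i].
Variable YU : U -> U -> int -> U.
Hypothesis bil : bilinear_modes YU.
Hypothesis irr : irreducible YU.
Hypothesis cdim : countable_dim U.

Lemma Y2lin u n : is_linear_map (fun v => YU u v n).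
Proof. by move=> a x y; case: bil => _ ->. Qed.

Definition commuting (psi : U -> U) := forall u w n, psi (YU u w n) = YU u (psi w) n.

Lemma D1 psi : is_linear_map psi -> commuting psi ->
  (forall z, psi z = 0) \/ ((forall z, psi z = 0 -> z = 0) /\ forall y, exists z, psi z = y).
Proof.
move=> Hl Hc.
have Hk : is_submodule YU (fun z => psi z = 0).
  split; first split.
  - exact: lin0.
  - by move=> a x y Hx Hy; rewrite Hl Hx Hy scaler0 addr0.
  - by move=> u w n Hw; rewrite Hc Hw (lin0 (Y2lin u n)).
case: (irr _ Hk) => [Hinj|]; last by left.
have Hi : is_submodule YU (fun y => exists z, psi z = y).
  split; first split.
  - by exists 0; exact: lin0.
  - by move=> a x y [zx <-] [zy <-]; exists (a *: zx + zy); rewrite Hl.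
  - by move=> u w n [z <-]; exists (YU u z n); rewrite Hc.
case: (irr _ Hi) => [H0|Hs].
  by left => z; apply: H0; exists z.
right; split => //.
Qed.

Lemma Dixmier phi : is_linear_map phi -> commuting phi ->
  exists c, forall z, phi z = c *: z.
Proof.
move=> Hl Hc.
case: (pselect (exists c, forall z, phi z = c *: z)) => // Hns; exfalso.
case: (pselect (exists u0 : U, u0 <> 0)) => [[u0 Hu0]|Htriv]; last first.
  apply: Hns; exists 0 => z.
  have -> : z = 0 by apply: contrapT => Hz; apply: Htriv; exists z.
  by rewrite scaler0 (lin0 Hl).
pose psi c z := phi z - c *: z.
have psil c : is_linear_map (psi c) by exact: lin_sub.
have psic c : commuting (psi c).
  move=> u w n; rewrite /psi Hc (linB (Y2lin u n)) (linZ (Y2lin u n)) //.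
have psiD c : (forall z, psi c z = 0 -> z = 0) /\ forall y, exists z, psi c z = y.
  case: (@D1 _ (psil c) (psic c)) => // H0.
  exfalso; apply: Hns; exists c => z; apply/eqP; rewrite -subr_eq0; apply/eqP.
  exact: H0.
have [X HX] : exists X : R[i] -> U, forall c, psi c (X c) = u0.
  have [X HX] := choice (fun c => proj2 (psiD c) u0).
  by exists X.
have Hinj : forall (r : R[i]) (z : U), phi z - r *: z = 0 -> z = 0.
  by move=> r z; exact: (proj1 (psiD r)).
have Hind : forall k (cs : 'I_k -> R[i]) (a : 'I_k -> R[i]), injective cs ->
    \sum_(i < k) a i *: X (cs i) = 0 -> forall i, a i = 0.
  move=> k cs a Hcs Hsum.
  pose Qi i := \prod_(j < k | j != i) ('X - (cs j)%:P).
  pose Qa := \prod_(j < k) ('X - (cs j)%:P).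
  have HQ i : Qa = Qi i * ('X - (cs i)%:P) by rewrite /Qa (bigD1 i) //= mulrC.
  pose p := \sum_(i < k) a i *: Qi i.
  have Hp : ev phi p u0 = 0.
    rewrite /p evsum.
    transitivity (ev phi Qa (\sum_(i < k) a i *: X (cs i))); last first.
      by rewrite Hsum (lin0 (ev_lin Hl Qa)).
    rewrite (linsum (ev_lin Hl Qa)); apply: eq_bigr => i _.
    rewrite evZ (linZ (ev_lin Hl Qa)) -(HX (cs i)) /psi (HQ i) evXsub //.
  have p0 : p = 0.
    case: (eqVneq p 0) => // pn0; exfalso; apply: Hu0; exact: (ev_inj Hl Hinj pn0 Hp).
  move=> i.
  have := congr1 (fun q => q.[cs i]) p0; rewrite horner0 /p horner_sum (bigD1 i) //=.
  rewrite big1 ?addr0; last first.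
    move=> j Hj; rewrite hornerZ horner_prod (bigD1 i) 1?eq_sym //=.
    by rewrite hornerXsubC subrr mul0r mulr0.
  rewrite hornerZ => /eqP; rewrite mulf_eq0 => /orP [/eqP //|].
  rewrite horner_prod => H; exfalso; move: H; apply/negP.
  apply/prodf_neq0 => j Hj; rewrite hornerXsubC subr_eq0.
  by apply: contra Hj => /eqP /Hcs ->.
case: cdim => f Hf.
pose Q (r : R) n := exists coef : 'I_n -> R[i],
  X (real_complex R r) = \sum_(i < n) coef i *: f i.
have HQ : forall r, exists n, Q r n.
  by move=> r; case: (Hf (X (real_complex R r))) => n [coef E]; exists n, coef.
have [n [h [hinj hQ]]] := @fiber_inf R Q HQ.
have [M HM] := choice (fun j : 'I_n.+1 => hQ j).
have [a [[j0 Hj0] Ha]] := @dep_lemma _ _ f n (fun j => X (real_complex R (h j))) M HM.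
apply: (negP Hj0); apply/eqP.
apply: (Hind _ (fun j : 'I_n.+1 => real_complex R (h j)) a) => //.
by move=> j1 j2 [] /hinj /val_inj.
Qed.
End Dix.
Arguments Y2lin {R U YU} bil u n.
Arguments commuting {R U} YU psi.
Arguments Dixmier {R U YU} bil irr cdim {phi}.

Section Dens.
Variable R : realType.
Variable U : lmodType R[i].
Variable YU : U -> U -> int -> U.
Hypothesis bil : bilinear_modes YU.
Hypothesis irr : irreducible YU.
Hypothesis cdim : countable_dim U.

Inductive Aop : (U -> U) -> Prop :=
 | A_id : Aop (fun x => x)
 | A_zero : Aop (fun _ => 0)
 | A_mode u n a : Aop a -> Aop (fun x => YU u (a x) n)
 | A_lin (c : R[i]) a b : Aop a -> Aop b -> Aop (fun x => c *: a x + b x).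

Lemma Aop_lin a : Aop a -> is_linear_map a.
Proof.
elim => {a} [|||c a b _ IHa _ IHb].
- by [].
- by move=> c x y; rewrite scaler0 addr0.
- by move=> u n a _ IH c x y; rewrite IH (Y2lin bil).
- move=> d x y; rewrite IHa IHb scalerDr scalerA mulrC -scalerA.
  by rewrite scalerDr addrACA.
Qed.

Fixpoint inspan (ys : seq U) (x : U) : Prop :=
  match ys with
  | [::] => x = 0
  | y :: ys' => exists c : R[i], inspan ys' (x - c *: y)
  end.

Definition kills (a : U -> U) (ys : seq U) := forall y, y \in ys -> a y = 0.

Lemma density ys x :
  (forall a, Aop a -> kills a ys -> a x = 0) -> inspan ys x.
Proof.
elim: ys x => [|y ys IH] x Hx.
  by apply: (Hx _ A_id) => y; rewrite in_nil.
case: (pselect (forall a, Aop a -> kills a ys -> a y = 0)) => Hy.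
  exists 0; rewrite scale0r subr0; apply: IH => a Ha Hk; apply: Hx => // z.
  by rewrite in_cons => /orP [/eqP -> | ]; [exact: Hy | exact: Hk].
pose sub z := exists a, [/\ Aop a, kills a ys & a y = z].
have Hsub : is_submodule YU sub.
  split; first split.
  - by exists (fun _ => 0); split => //; exact: A_zero.
  - move=> c z1 z2 [a1 [A1 K1 E1]] [a2 [A2 K2 E2]].
    exists (fun t => c *: a1 t + a2 t); split; first exact: A_lin.
      by move=> t Ht; rewrite K1 // K2 // scaler0 addr0.
    by rewrite E1 E2.
  - move=> u z n [a [A1 K1 E1]]; exists (fun t => YU u (a t) n); split.
    + exact: A_mode.
    + by move=> t Ht; rewrite K1 // (lin0 (Y2lin bil u n)).
    + by rewrite E1.
case: (irr _ Hsub) => [H0|Hall].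
  by exfalso; apply: Hy => a Ha Hk; apply: H0; exists a.
have [A HA] := choice Hall.
pose phi z := A z x.
have key : forall a z, Aop a -> kills a ys -> a y = z -> a x = phi z.
  move=> a z Ha Hk Hay; case: (HA z) => A1 K1 E1.
  have Hb : Aop (fun t => (-1) *: A z t + a t) by apply: A_lin.
  have := Hx _ Hb; rewrite scaleN1r => H.
  have : - A z x + a x = 0.
    apply: H => t; rewrite in_cons => /orP [/eqP -> | Ht].
      by rewrite Hay E1 scaleN1r addNr.
    by rewrite K1 // Hk // scaler0 addr0.
  by move/eqP; rewrite addrC subr_eq0 => /eqP.
have phil : is_linear_map phi.
  move=> c z1 z2; case: (HA z1) => A1 K1 E1; case: (HA z2) => A2 K2 E2.
  symmetry; apply: (key (fun t => c *: A z1 t + A z2 t)).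
  - exact: A_lin.
  - by move=> t Ht; rewrite K1 // K2 // scaler0 addr0.
  - by rewrite E1 E2.
have phic : commuting YU phi.
  move=> u z n; case: (HA z) => A1 K1 E1.
  symmetry; apply: (key (fun t => YU u (A z t) n)).
  - exact: A_mode.
  - by move=> t Ht; rewrite K1 // (lin0 (Y2lin bil u n)).
  - by rewrite E1.
have [c Hc] := Dixmier bil irr cdim phil phic.
exists c; apply: IH => a Ha Hk.
rewrite (linB (@Aop_lin a Ha)) (linZ (@Aop_lin a Ha)).
by rewrite (key a (a y) Ha Hk erefl) Hc subrr.
Qed.
End Dens.
Section SubSp.
Variables (C : fieldType) (T : lmodType C) (P : T -> Prop).
Hypothesis HP : is_subspace P.
Definition Pb : {pred T} := fun t => `[< P t >].
Lemma Pb_closed : subsemimod_closed Pb.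
Proof.
case: HP => H0 HD; split; first split.
- by apply/asboolP.
- move=> x y /asboolP Hx /asboolP Hy; apply/asboolP.
  by have := HD 1 x y Hx Hy; rewrite scale1r.
- move=> a x /asboolP Hx; apply/asboolP.
  by have := HD a x 0 Hx H0; rewrite addr0.
Qed.
Definition ST := {t : T | Pb t}.
HB.instance Definition _ := Choice.on ST.
HB.instance Definition _ := [isSub of ST for @sval T Pb].
HB.instance Definition _ := GRing.SubChoice_isSubLmodule.Build C T Pb ST Pb_closed.
Lemma valD (x y : ST) : val (x + y) = val x + val y.
Proof. exact: raddfD. Qed.
Lemma valZ (a : C) (x : ST) : val (a *: x) = a *: val x.
Proof. exact: linearZ. Qed.

Lemma span_all (U V : lmodType C) (tens : U -> V -> T) :
  is_tensor_product tens -> (forall u v, P (tens u v)) -> forall t, P t.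
Proof.
move=> [Hb Hu] Pt t.
pose f (u : U) (v : V) : ST := exist _ (tens u v) (introT (asboolP _) (Pt u v)).
have fb : bilinear_fun f.
  split => a x y z; apply: val_inj; rewrite valD valZ /=; case: Hb => H1 H2; by rewrite ?H1 ?H2.
have [h [hl hf hu]] := Hu ST f fb.
have [h0 [h0l h0f h0u]] := Hu T tens Hb.
have E1 : forall t, t = h0 t by apply: h0u.
have E2 : forall t, val (h t) = h0 t.
  apply: h0u.
  - by move=> a x y; rewrite hl valD valZ.
  - by move=> u v; rewrite hf.
rewrite (E1 t) -(E2 t); exact: (elimT (asboolP _) (valP (h t))).
Qed.
End SubSp.
Lemma single_sum (C : fieldType) (W : lmodType C) (lo : int) (M : nat) (F : int -> W) (p0 : int) (X : W) :
 (forall p, p != p0 -> F p = 0) -> F p0 = X -> ((p0 < lo \/ lo + M%:Z <= p0) -> X = 0) ->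
 \sum_(i < M) F (lo + (i : nat)%:Z) = X.
Proof.
move=> HF HX Hout.
have Hout' : ~~ ((lo <= p0) && (p0 < lo + M%:Z)) -> X = 0.
  move=> H; apply: Hout; move: H; rewrite negb_and -!ltNge => /orP [H|H]; [left|right] => //.
  by rewrite leNgt.
case: (boolP ((lo <= p0) && (p0 < lo + M%:Z))) => [/andP [H1 H2] | Hn].
  have Hk : (`|p0 - lo|%N < M)%N by lia.
  have Ek : lo + (`|p0 - lo|%N)%:Z = p0 by lia.
  rewrite (bigD1 (Ordinal Hk)) //= Ek HX big1 ?addr0 // => i Hi; apply: HF.
  apply: contra Hi => /eqP E; apply/eqP; apply: val_inj => /=; lia.
rewrite (Hout' Hn) big1 // => i _.
case: (eqVneq (lo + (i : nat)%:Z) p0) => [E|E]; last exact: HF.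
by rewrite E HX Hout'.
Qed.

Lemma sub_sum (C : fieldType) (T : lmodType C) (P : T -> Prop) (HP : is_subspace P)
  (I : Type) (r : seq I) (F : I -> T) : (forall i, P (F i)) -> P (\sum_(i <- r) F i).
Proof.
move=> HF; case: HP => H0 HD.
elim/big_rec: _ => // i y _ Hy; by have := HD 1 _ _ (HF i) Hy; rewrite scale1r.
Qed.

Lemma sub_sum_seq (C : fieldType) (T : lmodType C) (P : T -> Prop) (HP : is_subspace P)
  (I : eqType) (r : seq I) (F : I -> T) : (forall i, i \in r -> P (F i)) -> P (\sum_(i <- r) F i).
Proof.
move=> HF; rewrite big_seq_cond; case: HP => H0 HD.
elim/big_rec: _ => // i y /andP [Hi _] Hy; by have := HD 1 _ _ (HF i Hi) Hy; rewrite scale1r.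
Qed.

Lemma rearr (C : fieldType) (T : lmodType C) (a b d S : T) : a + b + (d - a + S) = d + (b + S).
Proof. by rewrite addrC -!addrA [- a + _]addrCA addKr [S + b]addrC. Qed.

Section Main.
Variable R : realType.
Variable G : groupType.
Variables U V T : lmodType R[i].
Variables (oneU : U) (YU : U -> U -> int -> U) (act : G -> U -> U).
Variables (oneV : V) (YV : V -> V -> int -> V) (Vg : G -> V -> Prop).
Variables (tens : U -> V -> T) (Ys : T -> T -> int -> T).
Hypothesis nlvaU : is_nlva oneU YU.
Hypothesis actH : acts_by_automorphisms oneU YU act.
Hypothesis nlvaV : is_nlva oneV YV.
Hypothesis grV : is_G_graded oneV YV Vg.
Hypothesis irrU : irreducible YU.
Hypothesis irrV : irreducible YV.
Hypothesis cdU : countable_dim U.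
Hypothesis tp : is_tensor_product tens.
Hypothesis sm : is_smash_modes YU YV act Vg tens Ys.

Lemma bilU : bilinear_modes YU. Proof. by case: nlvaU. Qed.
Lemma bilV : bilinear_modes YV. Proof. by case: nlvaV. Qed.
Lemma vacU : vacuum_axiom oneU YU. Proof. by case: nlvaU. Qed.
Lemma vacV : vacuum_axiom oneV YV. Proof. by case: nlvaV. Qed.
Lemma bilS : bilinear_modes Ys. Proof. by case: sm. Qed.

Lemma tensL v : is_linear_map (fun u => tens u v).
Proof. by move=> a x y; case: tp => [[-> _] _]. Qed.
Lemma tensR u : is_linear_map (fun v => tens u v).
Proof. by move=> a x y; case: tp => [[_ ->] _]. Qed.
Lemma YsR s n : is_linear_map (fun t => Ys s t n).
Proof. by move=> a x y; case: bilS => _ ->. Qed.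
Lemma YV1 y n : is_linear_map (fun v => YV v y n).
Proof. by move=> a x z; case: bilV => -> _. Qed.

Lemma tens0l v : tens 0 v = 0. Proof. exact: (lin0 (tensL v)). Qed.
Lemma tens0r u : tens u 0 = 0. Proof. exact: (lin0 (tensR u)). Qed.

Lemma act1 u : act 1%g u = u. Proof. by case: actH. Qed.
Lemma actK g u : act g (act g^-1%g u) = u.
Proof. by case: actH => _ H1 HM; rewrite -HM mulgV H1. Qed.

Lemma F1 u u' v' n : Ys (tens u oneV) (tens u' v') n = tens (YU u u' n) v'.
Proof.
have V1 : Vg 1%g oneV by case: grV.
have [lo [M [Hc ->]]] := (proj2 sm) 1%g u oneV u' v' n V1.
apply: (@single_sum _ _ lo M (fun p => tens (YU u (act 1%g u') p) (YV oneV v' (n - 1 - p))) n).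
- move=> p Hp; rewrite vacV; case: ifP; last by rewrite tens0r.
  by move/eqP => E; exfalso; move/eqP: Hp; apply; lia.
- rewrite act1 vacV (_ : n - 1 - n = -1) ?eqxx //; lia.
- move=> H; case: (Hc n H) => E.
    by rewrite act1 in E; rewrite E tens0l.
  have E2 : n - 1 - n = -1 by lia.
  by rewrite E2 vacV eqxx in E; rewrite E tens0r.
Qed.

Lemma F2 g v u' v' n : Vg g v -> Ys (tens oneU v) (tens u' v') n = tens (act g u') (YV v v' n).
Proof.
move=> Hv.
have [lo [M [Hc ->]]] := (proj2 sm) g oneU v u' v' n Hv.
apply: (@single_sum _ _ lo M (fun p => tens (YU oneU (act g u') p) (YV v v' (n - 1 - p))) (-1)).
- move=> p Hp; rewrite vacU; case: ifP; last by rewrite tens0l.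
  by move/eqP => E; exfalso; move/eqP: Hp; apply.
- by rewrite vacU eqxx (_ : n - 1 - -1 = n) //; lia.
- move=> H; case: (Hc (-1) H) => E.
    by rewrite vacU eqxx in E; rewrite E tens0l.
  have E2 : n - 1 - -1 = n by lia.
  by rewrite E2 in E; rewrite E tens0r.
Qed.


Definition tsumf (a : U -> U) (s : seq (U * V)) := \sum_(p <- s) tens (a p.1) p.2.
Definition tsum s := tsumf (fun x => x) s.

Lemma Aop_W (W : T -> Prop) (HW : is_submodule Ys W) a (Ha : @Aop R U YU a) s :
  W (tsum s) -> W (tsumf a s).
Proof.
move=> Hs; case: HW => [[W0 WD] WY].
elim: Ha => {a} [|||c a b _ IHa _ IHb].
- exact: Hs.
- by rewrite /tsumf big1 // => p _; rewrite tens0l.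
- move=> u n a _ IH.
  have -> : tsumf (fun x => YU u (a x) n) s = Ys (tens u oneV) (tsumf a s) n.
    by rewrite /tsumf (linsum (YsR _ n)); apply: eq_bigr => p _; rewrite F1.
  exact: WY.
- have -> : tsumf (fun x => c *: a x + b x) s = c *: tsumf a s + tsumf b s.
    rewrite /tsumf scaler_sumr -big_split /=; apply: eq_bigr => p _.
    by rewrite (tensL p.2).
  exact: WD.
Qed.

Lemma shorten s u v : @inspan R U (map fst s) u ->
  exists s', size s' = size s /\ tsum s' = tens u v + tsum s.
Proof.
elim: s u => [|[y v'] s IH] u /= Hin.
  by exists [::]; rewrite /tsum /tsumf big_nil Hin tens0l addr0.
case: Hin => c /IH [s'' [Hsz Hsum]].
exists ((y, c *: v + v') :: s''); split; first by rewrite /= Hsz.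
move: Hsum; rewrite /tsum /tsumf !big_cons /= => ->.
by rewrite (tensR y) (linB (tensL v)) (linZ (tensL v)) rearr.
Qed.

Lemma M1 (W : T -> Prop) (HW : is_submodule Ys W) n s : (size s <= n)%N ->
  W (tsum s) -> tsum s <> 0 -> exists u v, W (tens u v) /\ tens u v <> 0.
Proof.
elim: n s => [|n IH] [|[u1 v1] s'] //= Hs Ws Hn0;
  try by exfalso; apply: Hn0; rewrite /tsum /tsumf big_nil.
have Hs' : (size s' <= n)%N by [].
have Esum : tsum ((u1, v1) :: s') = tens u1 v1 + tsum s'.
  by rewrite /tsum /tsumf big_cons.
case: (pselect (@inspan R U (map fst s') u1)) => Hin.
  have [s'' [Hsz Hsum]] := shorten _ _ v1 Hin.
  apply: (IH s''); first by rewrite Hsz.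
    by rewrite Hsum -Esum.
  by rewrite Hsum -Esum.
have [a [Ha Hk Hau]] : exists a, [/\ @Aop R U YU a, @kills R U a (map fst s') & a u1 <> 0].
  apply: contrapT => H; apply: Hin; apply: (@density R U YU bilU irrU cdU) => a Ha Hk.
  apply: contrapT => Hau; apply: H; by exists a.
have Wa := @Aop_W W HW a Ha _ Ws.
have Ea : tsumf a ((u1, v1) :: s') = tens (a u1) v1.
  rewrite /tsumf big_cons /= big1_seq ?addr0 // => p Hp.
  by rewrite Hk ?tens0l //; apply: map_f.
rewrite Ea in Wa.
case: (pselect (tens (a u1) v1 = 0)) => Hz; last by exists (a u1), v1.
have HS : is_submodule YU (fun x => tens x v1 = 0).
  split; first split.
  - exact: tens0l.
  - by move=> c x y Hx Hy; rewrite (tensL v1) Hx Hy scaler0 addr0.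
  - by move=> u x m Hx; rewrite -F1 Hx (lin0 (YsR _ m)).
case: (irrU _ HS) => [H0|Hall].
  by exfalso; apply: Hau; apply: H0.
apply: (IH s') => //.
  by move: Ws; rewrite Esum Hall add0r.
by move: Hn0; rewrite Esum Hall add0r.
Qed.

Lemma main_irr : irreducible Ys.
Proof.
move=> W HW.
case: (pselect (exists w, W w /\ w <> 0)) => [[w [Ww Hw]]|Hno]; last first.
  by left => v Wv; apply: contrapT => Hv; apply: Hno; exists v.
right.
have Prep : forall t, exists s, t = tsum s.
  apply: (@span_all _ _ (fun t => exists s, t = tsum s) _ _ _ tens tp).
  - split; first by exists [::]; rewrite /tsum /tsumf big_nil.
    move=> a t1 t2 [s1 ->] [s2 ->].
    exists (map (fun p => (a *: p.1, p.2)) s1 ++ s2).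
    rewrite /tsum /tsumf big_cat big_map /= scaler_sumr; congr (_ + _).
    by apply: eq_bigr => p _; rewrite (linZ (tensL p.2)).
  - by move=> u v; exists [:: (u, v)]; rewrite /tsum /tsumf big_cons big_nil addr0.
have [s Es] := Prep w.
have [u0 [v0 [Wuv Huv]]] : exists u v, W (tens u v) /\ tens u v <> 0.
  by apply: (@M1 W HW _ s (leqnn (size s))); rewrite -Es.
case: HW => [[W0 WD] WY].
have HU : forall x, W (tens x v0).
  have HS : is_submodule YU (fun x => W (tens x v0)).
    split; first split.
    - by rewrite tens0l.
    - by move=> c x y Hx Hy; rewrite (tensL v0); apply: WD.
    - by move=> u x m Hx; rewrite -F1; apply: WY.
  case: (irrU _ HS) => [H0|] //.
  by exfalso; apply: Huv; rewrite (H0 _ Wuv) tens0l.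
have HV : forall y x, W (tens x y).
  have HS : is_submodule YV (fun y => forall x, W (tens x y)).
    split; first split.
    - by move=> x; rewrite tens0r.
    - by move=> c y1 y2 H1 H2 x; rewrite (tensR x); apply: WD.
    - move=> v y m Hy x.
      case: grV => _ Hdec _ _ _.
      have [sg [vs [_ Hvs ->]]] := Hdec v.
      rewrite (linsum (YV1 y m)) (linsum (tensR x)).
      apply: (@sub_sum_seq _ _ W (conj W0 WD)) => g Hg.
      rewrite -{1}(actK g x) -(F2 _ _ _ _ _ (Hvs g Hg)).
      exact: WY.
  case: (irrV _ HS) => [H0|] //.
  by exfalso; apply: Huv; rewrite (H0 v0 HU) tens0r.
move=> t; apply: (@span_all _ _ W (conj W0 WD) _ _ tens tp) => u v.
exact: HV.
Qed.

End Main.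

(* The ground field C is R[i] for a real field R (any realType is a model of
   the real numbers, so R[i] is the field of complex numbers). *)
Theorem corollary2p17 (R : realType) (G : groupType)
  (U : lmodType R[i]) (oneU : U) (YU : U -> U -> int -> U)
  (act : G -> U -> U)
  (V : lmodType R[i]) (oneV : V) (YV : V -> V -> int -> V)
  (Vg : G -> V -> Prop)
  (T : lmodType R[i]) (tens : U -> V -> T) (Ys : T -> T -> int -> T) :
  is_nlva oneU YU ->
  acts_by_automorphisms oneU YU act ->
  is_nlva oneV YV ->
  is_G_graded oneV YV Vg ->
  irreducible YU ->
  irreducible YV ->
  countable_dim U ->
  is_tensor_product tens ->
  is_smash_modes YU YV act Vg tens Ys ->
  irreducible Ys.
Proof.
  move=> H1 H2 H3 H4 H5 H6 H7 H8 H9.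
  exact (@main_irr R G U V T oneU YU act oneV YV Vg tens Ys H1 H2 H3 H4 H5 H6 H7 H8 H9).
Qed.
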